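(* Let $V,K,L$ be positive integers, $\boldsymbol\epsilon\in[0,1]^V$, and let $V_1,\dots,V_L$ be pairwise disjoint finite sets of rays (ray $j$ ''belongs to position $l$'' if $j\in V_l$), each with $|V_l|\ge K$; each ray $j$ has a vector $\mathbf p_j=(p_{ij})_{i=1}^V\in[0,1]^V$. Run the multi-position greedy algorithm: $\mathbf b^0=\boldsymbol\epsilon$, $A_0=V_1\cup\dots\cup V_L$, $J_l=\emptyset$ for all $l$; at iteration $t=1,2,\dots$ (while $A_{t-1}\neq\emptyset$) choose $j_t\in\arg\min_{j\in A_{t-1}}\sum_i b^{t-1}_i p_{ij}$, let $l_t$ be its position, add $j_t$ to $J_{l_t}$, set $\mathbf b^t=\mathbf b^{t-1}\odot\mathbf p_{j_t}$, and set $A_t=A_{t-1}\setminus\{j_t\}$, except that if $|J_{l_t}|=K$ then $A_t=A_{t-1}\setminus V_{l_t}$ (position $l_t$ is closed). This runs exactly $LK$ iterations. Let $f^t=\sum_i b_i^t$ and $E=\sum_i\epsilon_i$. Suppose real numbers $\overline{\mathrm{OPT}}_0\le\overline{\mathrm{OPT}}_1\le\dots\le\overline{\mathrm{OPT}}_{L-1}$ are such that for every $t\in\{0,\dots,LK-1\}$ the set $A_t$ contains a nonempty subset $S$ with $|S|\le LK$ and $\sum_{i=1}^V\prod_{j\in S}p_{ij}\le \overline{\mathrm{OPT}}_{\lfloor t/K\rfloor}$. Then $$f^{LK}\le \frac{E}{e}+\sum_{u=0}^{L-1}\gamma_u\,\overline{\mathrm{OPT}}_u,\qquad \gamma_u=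\Big(1-e^{-1/L}\Big)\Big(e^{-1/L}\Big)^{L-1-u}.$$
   Context: $\odot$ denotes coordinatewise product; $e$ is Euler's number. The quantity $\overline{\mathrm{OPT}}_u$ plays the role of the optimum cost still achievable with available rays after $u$ positions have been closed; at most $\lfloor t/K\rfloor$ positions are closed after $t$ iterations. *)

(* Defs.v *)
From Stdlib Require Import Reals Lra Lia Arith List.
Import ListNotations.
Open Scope R_scope.

Fixpoint sumR (n : nat) (f : nat -> R) : R :=
  match n with
  | O => 0
  | S m => sumR m f + f m
  end.

Definition prodR (S : list nat) (g : nat -> R) : R :=
  fold_right (fun j acc => g j * acc) 1 S.

(* Setting: rays are 0..N-1; ray j belongs to position pos j (< L), so
   V_l = {j < N | pos j = l}.  js t (t >= 1) is the ray chosen at iteration t. *)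

Fixpoint bvec (eps : nat -> R) (p : nat -> nat -> R) (js : nat -> nat)
  (t : nat) (i : nat) : R :=
  match t with
  | O => eps i
  | S t' => bvec eps p js t' i * p i (js t)
  end.

Definition fval (V : nat) eps p js (t : nat) : R :=
  sumR V (fun i => bvec eps p js t i).

(* |J_l| after t iterations: number of s in 1..t with pos (js s) = l *)
Fixpoint Jcount (pos : nat -> nat) (js : nat -> nat) (t : nat) (l : nat) : nat :=
  match t with
  | O => O
  | S t' => (Jcount pos js t' l + (if Nat.eqb (pos (js t)) l then 1 else 0))%nat
  end.

Fixpoint inA (N : nat) (K : nat) (pos : nat -> nat) (js : nat -> nat)
  (t : nat) (j : nat) : Prop :=
  match t with
  | O => (j < N)%nat
  | S t' => inA N K pos js t' j /\ j <> js t /\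
            ~ (Jcount pos js t (pos (js t)) = K /\ pos j = pos (js t))
  end.

(* the run js is a valid run of the multi-position greedy algorithm for
   iterations 1..T (any tie-breaking in the argmin) *)
Definition greedy_run (V N K : nat) (pos : nat -> nat) (eps : nat -> R)
  (p : nat -> nat -> R) (js : nat -> nat) (T : nat) : Prop :=
  forall t : nat, (1 <= t <= T)%nat ->
    inA N K pos js (t - 1) (js t) /\
    forall j, inA N K pos js (t - 1) j ->
      sumR V (fun i => bvec eps p js (t - 1) i * p i (js t))
      <= sumR V (fun i => bvec eps p js (t - 1) i * p i j).

Definition gamma (L u : nat) : R :=
  (1 - exp (- (1 / INR L))) * (exp (- (1 / INR L))) ^ (L - 1 - u).

(* Main.v *)
Require Import Defs.
From Stdlib Require Import Reals Lra Lia Arith List.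
Open Scope R_scope.

Lemma sumR_ext n f g : (forall i, (i < n)%nat -> f i = g i) -> sumR n f = sumR n g.
Proof. induction n; simpl; intros H; auto. rewrite IHn by (intros; apply H; lia). rewrite H by lia. auto. Qed.

Lemma sumR_le n f g : (forall i, (i < n)%nat -> f i <= g i) -> sumR n f <= sumR n g.
Proof. induction n; simpl; intros H; [lra|]. assert (H1 := H n ltac:(lia)). assert (sumR n f <= sumR n g) by (apply IHn; intros; apply H; lia). lra. Qed.

Lemma sumR_minus n f g : sumR n (fun i => f i - g i) = sumR n f - sumR n g.
Proof. induction n; simpl; [lra|]. rewrite IHn. lra. Qed.

Lemma sumR_scal n c f : sumR n (fun i => c * f i) = c * sumR n f.
Proof. induction n; simpl; [lra|]. rewrite IHn. lra. Qed.

Lemma prodR_bounds (S : list nat) (g : nat -> R) :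
  (forall j, In j S -> 0 <= g j <= 1) -> 0 <= prodR S g <= 1.
Proof.
  induction S as [|j S IH]; simpl; intros H; [lra|].
  assert (H1 := H j (or_introl eq_refl)).
  assert (H2 : 0 <= prodR S g <= 1) by (apply IH; intros; apply H; auto).
  unfold prodR in *; simpl. split; nra.
Qed.

Lemma key (V:nat) (b: nat->R) (p: nat->nat->R) (m : R) (S: list nat) :
 (forall i, (i<V)%nat -> 0 <= b i) ->
 (forall i j, (i<V)%nat -> In j S -> 0 <= p i j <= 1) ->
 (forall j, In j S -> m <= sumR V (fun i => b i * p i j)) ->
 sumR V b - sumR V (fun i => b i * prodR S (fun j => p i j)) <= INR (length S) * (sumR V b - m).
Proof.
  intros Hb Hp Hm. induction S as [|j S IH].
  - simpl length. rewrite (sumR_ext V (fun i => b i * prodR nil (fun j => p i j)) b).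
    + simpl. lra.
    + intros; unfold prodR; simpl; lra.
  - assert (IH' := IH ltac:(intros; apply Hp; simpl; auto) ltac:(intros; apply Hm; simpl; auto)).
    assert (Hj := Hm j (or_introl eq_refl)).
    assert (D : sumR V (fun i => b i * prodR S (fun j0 => p i j0)) -
                sumR V (fun i => b i * prodR (j :: S) (fun j0 => p i j0))
              <= sumR V b - sumR V (fun i => b i * p i j)).
    { rewrite <- !sumR_minus. apply sumR_le. intros i Hi.
      assert (P := prodR_bounds S (fun j0 => p i j0) ltac:(intros; apply Hp; simpl; auto)).
      assert (Q := Hp i j Hi (or_introl eq_refl)). assert (B := Hb i Hi).
      unfold prodR in *; simpl.
      set (F := fold_right _ 1 S) in *.
      assert (0 <= (b i * (1 - p i j)) * (1 - F)) by (apply Rmult_le_pos; [apply Rmult_le_pos|]; lra).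
      nra. }
    simpl length. rewrite S_INR.
    assert (sumR V (fun i => b i * p i j) <= sumR V b).
    { apply sumR_le. intros i Hi. assert (Q := Hp i j Hi (or_introl eq_refl)). assert (B := Hb i Hi). nra. }
    nra.
Qed.

Lemma inA_lt N K pos js t j : inA N K pos js t j -> (j < N)%nat.
Proof. revert j; induction t; simpl; intros j H; [auto| apply IHt; tauto]. Qed.

Lemma exp_pow x n : exp x ^ n = exp (INR n * x).
Proof.
  induction n; simpl. { rewrite Rmult_0_l, exp_0. auto. }
  rewrite IHn, <- exp_plus. f_equal. destruct n; simpl; lra.
Qed.

Lemma block (L K : nat) (x O : nat -> R) (a q : R) u :
 (0 < K)%nat -> 0 <= a -> a^K <= q -> q <= 1 -> (u < L)%nat ->
 (forall t, (t < L*K)%nat -> x (S t) <= x t /\ x (S t) <= O (t/K)%nat + a*(x t - O (t/K)%nat)) ->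
 x (u*K + K)%nat <= q * x (u*K)%nat + (1-q) * O u.
Proof.
  intros hK ha haq hq hu H.
  assert (HH : forall k, (k < K)%nat -> x (S (u*K+k)) <= x (u*K+k)%nat /\
             x (S (u*K+k)) <= O u + a*(x (u*K+k)%nat - O u)).
  { intros k hk. assert (E : ((u*K+k)/K)%nat = u).
    { rewrite Nat.div_add_l by lia. rewrite Nat.div_small by lia. lia. }
    assert (H' := H (u*K+k)%nat ltac:(nia)). rewrite E in H'. exact H'. }
  assert (Mono : forall k, (k <= K)%nat -> x (u*K+k)%nat <= x (u*K)%nat).
  { induction k; intros hk. { rewrite Nat.add_0_r; lra. }
    rewrite Nat.add_succ_r. destruct (HH k ltac:(lia)). assert (IH := IHk ltac:(lia)). lra. }
  set (x0 := x (u*K)%nat).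
  destruct (Rlt_le_dec x0 (O u)) as [Hlt|Hge].
  - assert (M := Mono K (le_n _)). fold x0 in M. nra.
  - assert (G : forall k, (k <= K)%nat -> x (u*K+k)%nat <= O u + a^k*(x0 - O u)).
    { induction k; intros hk. { rewrite Nat.add_0_r; simpl; unfold x0; lra. }
      rewrite Nat.add_succ_r. destruct (HH k ltac:(lia)) as [H1 H2].
      assert (IH := IHk ltac:(lia)).
      assert (0 <= a^k) by (apply pow_le; auto).
      simpl.
      destruct (Rlt_le_dec (x (u*K+k)%nat) (O u)); nra. }
    assert (G' := G K (le_n _)). nra.
Qed.

Lemma unroll (L K : nat) (x O : nat -> R) (a q : R) :
 (0 < K)%nat -> 0 <= a -> a^K <= q -> q <= 1 ->
 (forall t, (t < L*K)%nat -> x (S t) <= x t /\ x (S t) <= O (t/K)%nat + a*(x t - O (t/K)%nat)) ->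
 forall u, (u <= L)%nat ->
 x (u*K)%nat <= q^u * x 0%nat + sumR u (fun v => (1-q)*q^(u-1-v)*O v).
Proof.
  intros hK ha haq hq H u. induction u; intros hu.
  - simpl. lra.
  - replace (S u * K)%nat with (u*K + K)%nat by lia.
    assert (B := block L K x O a q u hK ha haq hq ltac:(lia) H).
    assert (IH := IHu ltac:(lia)).
    assert (0 <= q) by (apply Rle_trans with (a^K); [apply pow_le|]; auto).
    assert (E : sumR (S u) (fun v => (1-q)*q^(S u-1-v)*O v) =
       q * sumR u (fun v => (1-q)*q^(u-1-v)*O v) + (1-q) * O u).
    { match goal with |- sumR (S u) ?f = _ => change (sumR (S u) f) with (sumR u f + f u) end.
      rewrite <- sumR_scal.
      rewrite (sumR_ext u (fun v => (1-q)*q^(S u-1-v)*O v) (fun v => q * ((1-q)*q^(u-1-v)*O v))).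
      - replace (S u - 1 - u)%nat with 0%nat by lia. simpl. lra.
      - intros v hv. replace (S u - 1 - v)%nat with (S (u-1-v)) by lia. simpl. lra. }
    rewrite E. simpl pow. nra.
Qed.

Theorem theorem2
  (V K L N : nat) (pos : nat -> nat) (eps : nat -> R) (p : nat -> nat -> R)
  (js : nat -> nat) (OPT : nat -> R)
  (hV : (0 < V)%nat) (hK : (0 < K)%nat) (hL : (0 < L)%nat)
  (heps : forall i, (i < V)%nat -> 0 <= eps i <= 1)
  (hpos : forall j, (j < N)%nat -> (pos j < L)%nat)
  (hsize : forall l, (l < L)%nat ->
     (K <= length (filter (fun j => Nat.eqb (pos j) l) (seq 0 N)))%nat)
  (hp : forall i j, (i < V)%nat -> (j < N)%nat -> 0 <= p i j <= 1)
  (hrun : greedy_run V N K pos eps p js (L * K))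
  (hOPTmono : forall u, (S u < L)%nat -> OPT u <= OPT (S u))
  (hOPT : forall t, (t < L * K)%nat ->
     exists S : list nat,
       S <> nil /\ NoDup S /\ (length S <= L * K)%nat /\
       (forall j, In j S -> inA N K pos js t j) /\
       sumR V (fun i => prodR S (fun j => p i j)) <= OPT (t / K)%nat) :
  fval V eps p js (L * K)
  <= sumR V eps / exp 1 + sumR L (fun u => gamma L u * OPT u).
Proof.
  set (M := INR (L*K)).
  assert (HM1 : 1 <= M).
  { unfold M. replace 1 with (INR 1) by reflexivity. apply le_INR. nia. }
  assert (Hb : forall t, (t <= L*K)%nat -> forall i, (i < V)%nat -> 0 <= bvec eps p js t i <= 1).
  { induction t; intros ht i hi; simpl. { auto. }
    destruct (hrun (S t) ltac:(lia)) as [Hin _].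
    replace (S t - 1)%nat with t in Hin by lia.
    assert (hj := hp i (js (S t)) hi (inA_lt _ _ _ _ _ _ Hin)).
    assert (IH := IHt ltac:(lia) i hi). nra. }
  set (a := 1 - 1/M).
  assert (Step : forall t, (t < L*K)%nat ->
    fval V eps p js (S t) <= fval V eps p js t /\
    fval V eps p js (S t) <= OPT (t/K)%nat + a*(fval V eps p js t - OPT (t/K)%nat)).
  { intros t ht.
    destruct (hrun (S t) ltac:(lia)) as [Hin Hmin].
    replace (S t - 1)%nat with t in Hin, Hmin by lia.
    destruct (hOPT t ht) as [Sl [HSne [_ [HSlen [HSin HSopt]]]]].
    set (b := bvec eps p js t).
    set (m := sumR V (fun i => b i * p i (js (S t)))).
    assert (Hf1 : fval V eps p js (S t) = m) by reflexivity.
    assert (Hf0 : fval V eps p js t = sumR V b) by reflexivity.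
    rewrite Hf1, Hf0.
    assert (K1 := key V b p m Sl
      ltac:(intros i hi; apply (Hb t ltac:(lia) i hi))
      ltac:(intros i j hi hj; apply hp; auto; apply (inA_lt _ _ _ _ _ _ (HSin j hj)))
      ltac:(intros j hj; apply Hmin; apply HSin; auto)).
    assert (G : sumR V (fun i => b i * prodR Sl (fun j => p i j)) <= OPT (t/K)%nat).
    { eapply Rle_trans; [|apply HSopt]. apply sumR_le. intros i hi.
      assert (P := prodR_bounds Sl (fun j => p i j)
        ltac:(intros j hj; apply hp; auto; apply (inA_lt _ _ _ _ _ _ (HSin j hj)))).
      assert (B := Hb t ltac:(lia) i hi). unfold b. nra. }
    assert (Hmf : m <= sumR V b).
    { unfold m. apply sumR_le. intros i hi.
      assert (hj := hp i (js (S t)) hi (inA_lt _ _ _ _ _ _ Hin)).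
      assert (B := Hb t ltac:(lia) i hi). unfold b. nra. }
    assert (Hn : 1 <= INR (length Sl) <= M).
    { destruct Sl as [|j S']; [congruence|]. split.
      - simpl length. rewrite S_INR. assert (0 <= INR (length S')) by apply pos_INR. lra.
      - unfold M. apply le_INR. auto. }
    split; [lra|].
    unfold a.
    assert (sumR V b - OPT (t/K)%nat <= M * (sumR V b - m)) by nra.
    assert (E : OPT (t / K)%nat + (1 - 1 / M) * (sumR V b - OPT (t / K)%nat)
       = sumR V b - (sumR V b - OPT (t/K)%nat) / M) by (field; lra).
    rewrite E.
    assert ((sumR V b - OPT (t/K)%nat) / M <= sumR V b - m).
    { apply Rmult_le_reg_r with M; [lra|]. unfold Rdiv. rewrite Rmult_assoc, Rinv_l by lra. lra. }
    lra. }
  set (q := exp (- (1 / INR L))).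
  assert (HLpos : 0 < INR L) by (apply lt_0_INR; lia).
  assert (HKpos : 0 < INR K) by (apply lt_0_INR; lia).
  assert (ha : 0 <= a).
  { unfold a. assert (1/M <= 1). { unfold Rdiv. rewrite Rmult_1_l. rewrite <- Rinv_1. apply Rinv_le_contravar; lra. } lra. }
  assert (haq : a^K <= q).
  { apply Rle_trans with (exp (- (1/M)) ^ K).
    - apply pow_incr. split; auto. unfold a. pose proof (exp_ineq1_le (- (1/M))). lra.
    - rewrite exp_pow. unfold q, M. rewrite mult_INR. right. f_equal. field. lra. }
  assert (hq : q <= 1).
  { unfold q. set (y := 1 / INR L). pose proof (exp_ineq1_le y).
    assert (0 < y) by (unfold y, Rdiv; rewrite Rmult_1_l; apply Rinv_0_lt_compat; lra).
    assert (exp (- y) * exp y = 1) by (rewrite <- exp_plus; replace (-y+y) with 0 by ring; apply exp_0).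
    pose proof (exp_pos (-y)). nra. }
  assert (U := unroll L K (fval V eps p js) OPT a q hK ha haq hq Step L (le_n _)).
  assert (E1 : q^L = / exp 1).
  { unfold q. rewrite exp_pow. rewrite <- exp_Ropp. f_equal. field. lra. }
  assert (E2 : fval V eps p js 0 = sumR V eps) by reflexivity.
  rewrite E1, E2 in U. unfold Rdiv. rewrite Rmult_comm.
  eapply Rle_trans; [apply U|]. right. f_equal.
Qed.
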